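(* Let $\xi$ be an American option and let $\mathcal{Z}^{\mathrm{bd}}_0$ be given by the construction in the context. Then \[ \mathcal{Z}^{\mathrm{bd}}_0=\{x\in\mathbb{R}^d:\exists(y,\chi)\in\Phi^{\mathrm{bg}}(\xi),\ x=y_0\}, \] and for each $j=1,\ldots,d$ the bid price satisfies $\pi^{\mathrm{bg}}_j(\xi)=\max\{-x\in\mathbb{R}: xe^j\in\mathcal{Z}^{\mathrm{bd}}_0\}$ (the maximum being attained). Moreover, there exists $(y,\chi)\in\Phi^{\mathrm{bg}}(\xi)$ with $\pi^{\mathrm{bg}}_j(\xi)e^j=-y_0$.
   Context: Finite filtered probability space $(\Omega,\mathcal{F},\mathbb{P};(\mathcal{F}_t)_{t=0}^T)$, $\mathcal{F}_0$ trivial, $\mathcal{F}_T=2^\Omega$, $\mathbb{P}(\{\omega\})>0$. $\Omega_t$: atoms (nodes) of $\mathcal{F}_t$; $\mathrm{succ}\,\mu=\{\nu\in\Omega_{t+1}:\nu\subseteq\mu\}$. $\mathcal{L}_t$: $\mathcal{F}_t$-measurable $\mathbb{R}^d$-valued random variables. $d$ assets, $\mathcal{F}_t$-measurable exchange rates $\pi^{jk}_t>0$, $\pi^{jj}_t=1$. $\mathcal{K}^\mu_t$: convex cone generated by $e^1,\ldots,e^d$ and $\pi^{jk}_t(\mu)e^j-e^k$; $\mathcal{K}_t=\{x\in\mathcal{L}_t:x(\mu)\in\mathcal{K}^\mu_t\ \forall\mu\}$. Deferred solvency cone $\mathcal{Q}_t$: $z\in\mathcal{L}_t$ for which there exist $y_{t+1},\ldots,y_{T+1}$,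 $y_s\in\mathcal{L}_{s-1}$, $y_{T+1}=0$, with $z-y_{t+1}\in\mathcal{K}_t$, $y_s-y_{s+1}\in\mathcal{K}_s$ ($s>t$); $\mathcal{Q}^\mu_t=\{z(\mu):z\in\mathcal{Q}_t\}$. Trading strategies $\Phi$: $y=(y_t)_{t=0}^{T+1}$, $y_0\in\mathbb{R}^d$, $y_t\in\mathcal{L}_{t-1}$, $y_{T+1}=0$. Mixed stopping times $\mathcal{X}$: adapted $[0,1]$-valued $\chi$ with $\sum_{t=0}^T\chi_t=1$. American option: adapted $\mathbb{R}^d$-valued $\xi$. $\Phi^{\mathrm{bg}}(\xi)$: set of pairs $(y,\chi)\in\Phi\times\mathcal{X}$ with $y_t+\chi_t\xi_t-y_{t+1}\in\mathcal{K}_t$ for each $t=0,\ldots,T$. Bid price: $\pi^{\mathrm{bg}}_j(\xi)=\sup\{-x\in\mathbb{R}:\exists(y,\chi)\in\Phi^{\mathrm{bg}}(\xi),\ xe^j=y_0\}$. Construction (nodewise): $\mathcal{U}^{\mathrm{bd}\mu}_t=-\xi_t(\mu)+\mathcal{Q}^\mu_t$; at $T$: $\mathcal{Z}^{\mathrm{bd}\mu}_T=\mathcal{V}^{\mathrm{bd}\mu}_T=\mathcal{W}^{\mathrm{bd}\mu}_T=\mathcal{U}^{\mathrm{bd}\mu}_T$; for $t<T$: $\mathcal{W}^{\mathrm{bd}\mu}_t=\bigcap_{\nu\in\mathrm{succ}\,\mu}\mathcal{Z}^{\mathrm{bd}\nu}_{t+1}$, $\mathcal{V}^{\mathrm{bd}\mu}_t=\mathcal{W}^{\mathrm{bd}\mu}_t+\mathcal{Q}^\mu_t$,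 $\mathcal{Z}^{\mathrm{bd}\mu}_t=\mathrm{conv}\{\mathcal{U}^{\mathrm{bd}\mu}_t,\mathcal{V}^{\mathrm{bd}\mu}_t\}$. $\mathcal{Z}^{\mathrm{bd}}_0$ is the set at the root node. Standing assumption: no arbitrage (no $y\in\Phi$ with $y_0=0$, $y_t-y_{t+1}\in\mathcal{K}_t$ for $t<T$ and $y_T-x\in\mathcal{K}_T$ for a nonzero componentwise non-negative $x\in\mathcal{L}_T$). *)

(* Defs.v *)
From HB Require Import structures.
From mathcomp Require Import all_boot all_order all_algebra.
From mathcomp Require Import boolp classical_sets reals constructive_ereal ereal.

Set Implicit Arguments.
Unset Strict Implicit.
Unset Printing Implicit Defensive.

Import Order.TTheory GRing.Theory Num.Theory.
Local Open Scope ring_scope.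
Local Open Scope classical_set_scope.

Section Market.
Variables (R : realType) (d : nat) (Omega : finType) (T : nat).
(* filtration, given by the atoms (nodes) of F_t *)
Variable F : nat -> {set {set Omega}}.
Variable pi : nat -> Omega -> 'I_d -> 'I_d -> R.

Definition vec := 'rV[R]_d.

Definition e (j : 'I_d) : vec := delta_mx 0 j.

Definition meas {A : Type} (t : nat) (x : Omega -> A) : Prop :=
  forall mu, mu \in F t -> forall w1 w2, w1 \in mu -> w2 \in mu -> x w1 = x w2.

(* solvency cone K_t^mu evaluated at a scenario w (pi_t is F_t-measurable) *)
Definition inK (t : nat) (w : Omega) (v : vec) : Prop :=
  exists (a : 'I_d -> R) (b : 'I_d -> 'I_d -> R),
    (forall j, 0 <= a j) /\ (forall j k, 0 <= b j k) /\
    v = \sum_(j < d) a j *: e j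
        + \sum_(j < d) \sum_(k < d) b j k *: (pi t w j k *: e j - e k).

Definition inKrv (t : nat) (z : Omega -> vec) : Prop :=
  meas t z /\ forall w, inK t w (z w).

Definition inQ (t : nat) (z : Omega -> vec) : Prop :=
  meas t z /\
  exists y : nat -> Omega -> vec,
    (forall s, (t < s <= T.+1)%N -> meas s.-1 (y s)) /\
    (forall w, y T.+1 w = 0) /\
    (forall w, inK t w (z w - y t.+1 w)) /\
    (forall s, (t < s <= T)%N -> forall w, inK s w (y s w - y s.+1 w)).

Definition Qnode (t : nat) (mu : {set Omega}) : set vec :=
  [set v | exists z, inQ t z /\ forall w, w \in mu -> z w = v].

Definition conv (A : set vec) : set vec :=
  [set x | exists (n : nat) (p : 'I_n -> vec) (l : 'I_n -> R),
     (forall i, A (p i)) /\ (forall i, 0 <= l i) /\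
     \sum_(i < n) l i = 1 /\ x = \sum_(i < n) l i *: p i].

Definition setadd (A B : set vec) : set vec :=
  [set x | exists a b, A a /\ B b /\ x = a + b].

Variable xi : nat -> Omega -> vec.

Definition Ubd (t : nat) (mu : {set Omega}) : set vec :=
  [set v | exists q, Qnode t mu q /\ forall w, w \in mu -> v = - xi t w + q].

(* Zrec n t mu = Z^{bd mu}_t when n = T - t *)
Fixpoint Zrec (n t : nat) (mu : {set Omega}) : set vec :=
  match n with
  | 0 => Ubd t mu
  | n'.+1 =>
      let W := [set x | forall nu, nu \in F t.+1 -> nu \subset mu ->
                          Zrec n' t.+1 nu x] in
      conv (Ubd t mu `|` setadd W (Qnode t mu))
  end.

Definition Zbd0 : set vec := Zrec T 0 [set: Omega]%SET.

Definition is_strategy (y : nat -> Omega -> vec) : Prop :=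
  meas 0 (y 0%N) /\
  (forall t, (1 <= t <= T.+1)%N -> meas t.-1 (y t)) /\
  (forall w, y T.+1 w = 0).

Definition is_mst (chi : nat -> Omega -> R) : Prop :=
  (forall t, (t <= T)%N -> meas t (chi t)) /\
  (forall t w, (t <= T)%N -> 0 <= chi t w <= 1) /\
  (forall w, \sum_(t < T.+1) chi t w = 1).

Definition Phi_bg (y : nat -> Omega -> vec) (chi : nat -> Omega -> R) : Prop :=
  is_strategy y /\ is_mst chi /\
  forall t, (t <= T)%N -> forall w,
    inK t w (y t w + chi t w *: xi t w - y t.+1 w).

Definition init_bg : set vec :=
  [set x | exists y chi, Phi_bg y chi /\ forall w, y 0%N w = x].

Definition bid_price (j : 'I_d) : \bar R :=
  ereal_sup [set (- x)%:E | x in [set x : R | init_bg (x *: e j)]].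

End Market.

Section Hyps.
Variables (R : realType) (d : nat) (Omega : finType) (T : nat).
Variable F : nat -> {set {set Omega}}.
Variable pi : nat -> Omega -> 'I_d -> 'I_d -> R.

Definition filtered_space (P : Omega -> R) : Prop :=
  (forall w, 0 < P w) /\ \sum_w P w = 1 /\
  (forall t, (t <= T)%N -> finset.partition (F t) [set: Omega]%SET) /\
  (forall t, (t < T)%N -> forall nu, nu \in F t.+1 ->
       exists2 mu, mu \in F t & nu \subset mu) /\
  F 0%N = [set [set: Omega]]%SET /\
  F T = [set [set w] | w : Omega]%SET.

Definition rates_ok : Prop :=
  forall t, (t <= T)%N ->
    meas F t (pi t) /\
    (forall w j k, 0 < pi t w j k) /\ (forall w j, pi t w j j = 1).

Definition adapted (xi : nat -> Omega -> vec R d) : Prop :=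
  forall t, (t <= T)%N -> meas F t (xi t).

Definition no_arbitrage : Prop :=
  ~ exists (y : nat -> Omega -> vec R d) (x : Omega -> vec R d),
      is_strategy T F y /\ (forall w, y 0%N w = 0) /\
      (forall t, (t < T)%N -> forall w, inK pi t w (y t w - y t.+1 w)) /\
      meas F T x /\ (forall w i, 0 <= x w 0 i) /\ (exists w, x w != 0) /\
      (forall w, inK pi T w (y T w - x w)).
End Hyps.

(* Main.v *)
Require Import Defs.
From HB Require Import structures.
From mathcomp Require Import all_boot all_order all_algebra.
From mathcomp Require Import boolp classical_sets reals constructive_ereal ereal.
From mathcomp Require Import ring lra zify.
Import Order.TTheory GRing.Theory Num.Theory.
Set Implicit Arguments.
Unset Strict Implicit.
Unset Printing Implicit Defensive.
Local Open Scope ring_scope.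

Section FM.
Variable R : realFieldType.
Variable V : finType.

Definition upd (v : V -> R) k s := fun u => if u == k then s else v u.
Definition zv : V -> R := fun _ => 0.
Definition coef (f : (V -> R) -> R) k := f (upd zv k 1) - f zv.
Definition caff f := forall v k s, f (upd v k s) = f v + (s - v k) * coef f k.

Lemma caffP f (c : V -> R) : (forall v k s, f (upd v k s) = f v + (s - v k) * c k) -> caff f.
Proof.
move=> H v k s; rewrite H /coef H /zv /=; congr (_ + _ * _); ring.
Qed.

Lemma caff_var u : caff (fun v => v u).
Proof.
apply: (caffP (c := fun k => (u == k)%:R)) => v k s; rewrite /upd.
by case: eqP => [->|_]; rewrite ?mulr1 ?mulr0 ?addr0 //; ring.
Qed.

Lemma caff_cst a : caff (fun _ => a).
Proof. by apply: (caffP (c := fun _ => 0)) => v k s; rewrite mulr0 addr0. Qed.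

Lemma caff_lin a b f g : caff f -> caff g -> caff (fun v => a * f v + b * g v).
Proof.
move=> Hf Hg; apply: (caffP (c := fun k => a * coef f k + b * coef g k)) => v k s.
rewrite Hf Hg; ring.
Qed.

Lemma caff_add f g : caff f -> caff g -> caff (fun v => f v + g v).
Proof.
move=> Hf Hg; apply: (caffP (c := fun k => coef f k + coef g k)) => v k s.
rewrite Hf Hg; ring.
Qed.

Lemma caff_scale a f : caff f -> caff (fun v => a * f v).
Proof.
move=> Hf; apply: (caffP (c := fun k => a * coef f k)) => v k s.
rewrite Hf; ring.
Qed.

Lemma caff_opp f : caff f -> caff (fun v => - f v).
Proof.
move=> Hf; apply: (caffP (c := fun k => - coef f k)) => v k s.
rewrite Hf; ring.
Qed.

Lemma caff_sub f g : caff f -> caff g -> caff (fun v => f v - g v).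
Proof. by move=> Hf Hg; apply: caff_add => //; apply: caff_opp. Qed.

Lemma caff_sum (I : finType) (f : I -> (V -> R) -> R) :
  (forall i, caff (f i)) -> caff (fun v => \sum_i f i v).
Proof.
move=> Hf; apply: (caffP (c := fun k => \sum_i coef (f i) k)) => v k s.
rewrite mulr_sumr -big_split /=; apply: eq_bigr => i _; exact: Hf.
Qed.

Lemma caff_mulc a f : caff f -> caff (fun v => f v * a).
Proof.
move=> Hf; apply: (caffP (c := fun k => coef f k * a)) => v k s.
rewrite Hf; ring.
Qed.

Lemma caff_indep f k v s : caff f -> coef f k = 0 -> f (upd v k s) = f v.
Proof. by move=> Hf H0; rewrite Hf H0 mulr0 addr0. Qed.

Lemma upd_upd v k s s' : upd (upd v k s) k s' = upd v k s'.
Proof. by apply: funext => u; rewrite /upd; case: eqP. Qed.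

Lemma upd_same v k : upd v k (v k) = v.
Proof. by apply: funext => u; rewrite /upd; case: eqP => [->|]. Qed.

Lemma upd_eq v k s : upd v k s k = s.
Proof. by rewrite /upd eqxx. Qed.

Lemma fin_argmax (I : finType) (P : pred I) (f : I -> R) :
  (exists i, P i) -> exists2 i, P i & forall j, P j -> f j <= f i.
Proof.
case=> i0 Pi0; case: (arg_maxP f Pi0) => i Pi Hi; exists i => // j Pj; exact: Hi.
Qed.

Lemma fm_step (I : finType) (g : I -> (V -> R) -> R) k :
  (forall i, caff (g i)) ->
  exists (I' : finType) (h : I' -> (V -> R) -> R),
   [/\ (forall i, caff (h i)), (forall i, coef (h i) k = 0),
       (forall u, (forall i, coef (g i) u = 0) -> forall i, coef (h i) u = 0) &
       (forall v, (exists s, forall i, 0 <= g i (upd v k s)) <-> forall i, 0 <= h i v)].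
Proof.
move=> Hg.
pose c i := coef (g i) k.
pose h (x : (I + (I * I))%type) : (V -> R) -> R :=
  match x with
  | inl i => if c i == 0 then g i else fun _ => 0
  | inr pq => if (0 < c pq.1) && (c pq.2 < 0) then
                 fun v => (- c pq.2) * g pq.1 v + c pq.1 * g pq.2 v
               else fun _ => 0
  end.
have coefc : forall a, coef (fun _ : V -> R => a) =1 fun _ => 0.
  by move=> a u; rewrite /coef subrr.
have coefl : forall a b f g' u, coef (fun v => a * f v + b * g' v) u = a * coef f u + b * coef g' u.
  by move=> a b f g' u; rewrite /coef; ring.
exists (I + (I * I))%type, h; split.
- case=> [i|[p q]] /=; first by case: ifP => _; [exact: Hg | exact: caff_cst].
  by case: ifP => _; [apply: caff_lin | exact: caff_cst].
- case=> [i|[p q]] /=; first by case: ifP => [/eqP|_] //; rewrite coefc.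
  case: ifP => _; last by rewrite coefc.
  by rewrite coefl /c; ring.
- move=> u Hu; case=> [i|[p q]] /=; first by case: ifP => _; rewrite ?coefc ?Hu.
  by case: ifP => _; rewrite ?coefc // coefl !Hu; ring.
move=> v; split.
  case=> s Hs; case=> [i|[p q]] /=.
    case: ifP => [/eqP ci0|_] //.
    by rewrite -(caff_indep v s (Hg i) ci0).
  case: ifP => // /andP [cp cq].
  have e1 : forall f, caff f -> coef f k = 0 -> f v = f (upd v k s).
    by move=> f Hf H0; rewrite caff_indep.
  rewrite (e1 _ (caff_lin _ _ (Hg p) (Hg q))); last by rewrite coefl /c; ring.
  apply: addr_ge0; apply: mulr_ge0 => //; rewrite ?oppr_ge0; exact: ltW.
move=> Hh.
pose r i := g i (upd v k 0).
have gE : forall i s, g i (upd v k s) = r i + s * c i.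
  move=> i s; rewrite /r -{1}(upd_upd v k 0 s) Hg upd_eq subr0 //.
have hE : forall i, g i v = r i + v k * c i.
  by move=> i; rewrite -gE upd_same.
have Hz : forall i, c i = 0 -> 0 <= r i.
  move=> i ci0; have := Hh (inl i); rewrite /= ci0 eqxx hE ci0 mulr0 addr0 //.
have Hpq : forall p q, 0 < c p -> c q < 0 -> - r p / c p <= r q / (- c q).
  move=> p q cp cq; have := Hh (inr (p, q)); rewrite /= cp cq /= !hE.
  have cqn : 0 < - c q by rewrite oppr_gt0.
  rewrite ler_pdivrMr // mulrAC ler_pdivlMr // => H.
  rewrite mulNr mulrN; rewrite -subr_ge0; move: H; rewrite -subr_ge0.
  congr (0 <= _); ring.
case: (boolP [exists p, 0 < c p]) => [/existsP [p0 cp0]|/existsPn Hn].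
  have [p Pp Hp] := fin_argmax (fun i => - r i / c i) (ex_intro (fun i => 0 < c i) p0 cp0).
  exists (- r p / c p) => i; rewrite gE.
  case: (ltrgt0P (c i)) => [ci|ci|ci].
  - have := Hp i ci; rewrite ler_pdivrMr // => H.
    set x := - r p / c p in H *; lra.
  - have := Hpq p i Pp ci; rewrite ler_pdivlMr ?oppr_gt0 //.
    by rewrite mulrN -subr_ge0 opprK addrC.
  - by rewrite ci mulr0 addr0; apply: Hz.
exists (- \sum_i `|r i / c i|) => i; rewrite gE.
case: (ltrgt0P (c i)) => [ci|ci|ci].
- by move: (Hn i); rewrite ci.
- have Hle : `|r i / c i| <= \sum_j `|r j / c j|.
    by rewrite (bigD1 i) //= lerDl sumr_ge0.
  have : - \sum_j `|r j / c j| <= - `|r i / c i| by rewrite lerN2.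
  move=> H2; have H3 : - `|r i / c i| <= r i / (- c i).
    by rewrite invrN mulrN lerN2; apply: ler_norm.
  have H4 := le_trans H2 H3.
  move: H4; rewrite ler_pdivlMr ?oppr_gt0 // mulrN -subr_ge0 opprK addrC //.
- by rewrite ci mulr0 addr0; apply: Hz.
Qed.


Lemma fm_list (l : seq V) : forall (I : finType) (g : I -> (V -> R) -> R),
  (forall i, caff (g i)) ->
  exists (I' : finType) (h : I' -> (V -> R) -> R),
   [/\ (forall i, caff (h i)), (forall u, u \in l -> forall i, coef (h i) u = 0),
       (forall u, (forall i, coef (g i) u = 0) -> forall i, coef (h i) u = 0) &
       (forall v, (exists v', (forall u, u \notin l -> v' u = v u) /\
                  forall i, 0 <= g i v') <-> forall i, 0 <= h i v)].
Proof.
elim: l => [|k l IH] I g Hg.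
  exists I, g; split => // v; split; last by move=> H; exists v.
  by case=> v' [Hv' H]; have -> : v = v' by apply: funext => u; rewrite Hv'.
have [I1 [g1 [Hg1 Hk Hpres1 Heq1]]] := fm_step k Hg.
have [I2 [h [Hh Hl Hpres2 Heq2]]] := IH I1 g1 Hg1.
exists I2, h; split => //.
- move=> u; rewrite inE => /orP [/eqP ->|ul] i; last exact: Hl.
  by apply: Hpres2.
- by move=> u Hu; apply: Hpres2; apply: Hpres1.
move=> v; rewrite -Heq2; split.
  case=> v' [Hv' Hs]; exists (upd v' k (v k)); split.
    move=> u ul; rewrite /upd; case: eqP => [->//|/eqP uk]; apply: Hv'.
    by rewrite inE negb_or uk.
  by apply/Heq1; exists (v' k); rewrite upd_upd upd_same.
case=> v'' [Hv'' /Heq1 [s Hs]]; exists (upd v'' k s); split => //.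
move=> u; rewrite inE negb_or => /andP [uk ul]; rewrite /upd (negbTE uk).
exact: Hv''.
Qed.

Lemma caff_agree f (l : seq V) v w : caff f -> (forall u, u \in l -> coef f u = 0) ->
  (forall u, u \notin l -> v u = w u) -> f v = f w.
Proof.
move=> Hf; elim: l v => [|k l IH] v Hc Hvw.
  by have -> : v = w by apply: funext => u; apply: Hvw.
rewrite -(caff_indep v (w k) Hf (Hc k (mem_head _ _))).
apply: IH => [u ul|u ul]; first by apply: Hc; rewrite inE ul orbT.
rewrite /upd; case: eqP => [->//|/eqP uk]; apply: Hvw.
by rewrite inE negb_or uk.
Qed.

Lemma fm_proj (I : finType) (g : I -> (V -> R) -> R) (p : V) :
  (forall i, caff (g i)) ->
  exists (I' : finType) (a b : I' -> R), forall r,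
    (exists v, v p = r /\ forall i, 0 <= g i v) <-> forall i, 0 <= a i + r * b i.
Proof.
move=> Hg.
have [I' [h [Hh Hl _ Heq]]] := fm_list [seq u <- enum V | u != p] Hg.
exists I', (fun i => h i zv), (fun i => coef (h i) p) => r.
have hE : forall i v, h i v = h i zv + v p * coef (h i) p.
  move=> i v; rewrite (caff_agree (v:=v) (w:=upd zv p (v p)) (Hh i) (fun u hu => Hl u hu i)).
    by rewrite Hh /zv subr0.
  move=> u; rewrite mem_filter mem_enum andbT negbK => /eqP ->.
  by rewrite upd_eq.
split.
  case=> v [vp Hs] i; rewrite -vp -hE; move: i; apply/(Heq v); by exists v.

move=> H; have : forall i, 0 <= h i (upd zv p r).
  by move=> i; rewrite hE upd_eq.
move/Heq => [v' [Hv' Hs]]; exists v'; split => //.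
by rewrite Hv' ?upd_eq // mem_filter eqxx.
Qed.

End FM.

Section Poly1.
Variable R : realFieldType.

Definition poly1 (S : R -> Prop) := exists (I : finType) (a b : I -> R),
  forall r, S r <-> forall i, 0 <= a i + r * b i.

Lemma poly1_min S : poly1 S -> (exists r, S r) -> (exists L, forall r, S r -> L <= r) ->
  exists m, S m /\ forall r, S r -> m <= r.
Proof.
case=> I [a [b HS]] [x0 Sx0] [L HL].
have H0 := (HS x0).1 Sx0.
case: (boolP [exists i, 0 < b i]) => [/existsP [i0 bi0]|/existsPn Hn].
  have [p Pp Hp] := fin_argmax (fun i => - a i / b i) (ex_intro (fun i => 0 < b i) i0 bi0).
  exists (- a p / b p); split.
    apply/HS => i; case: (ltrgt0P (b i)) => [bi|bi|bi].
    - have := Hp i bi; rewrite ler_pdivrMr // => H.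
      set x := - a p / b p in H *; lra.
    - have Hm : - a p / b p <= x0.
        rewrite ler_pdivrMr //; have := H0 p; lra.
      have := H0 i; have : x0 * b i <= - a p / b p * b i by rewrite ler_wnM2r // ltW.
      lra.
    - by rewrite bi mulr0 addr0; have := H0 i; rewrite bi mulr0 addr0.
  move=> r /HS /(_ p) H; rewrite ler_pdivrMr //; lra.
exfalso.
pose r := Num.min x0 (L - 1).
have : S r.
  apply/HS => i; have := H0 i; have bi : b i <= 0 by rewrite leNgt Hn.
  have : x0 * b i <= r * b i by rewrite ler_wnM2r // ge_min lexx.
  lra.
move/HL; rewrite le_min => /andP [_]; lra.
Qed.

Lemma poly1_closed0 S : poly1 S ->
  (forall e, 0 < e -> exists x, [/\ 0 <= x, x < e & S x]) -> S 0.
Proof.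
case=> I [a [b HS]] H; apply/HS => i; rewrite mul0r addr0.
rewrite leNgt; apply/negP => ai.
have e0 : 0 < - a i / (`|b i| + 1).
  by rewrite divr_gt0 ?oppr_gt0 // ltr_wpDl.
have [x [x0 xe /HS /(_ i) Hx]] := H _ e0.
have : x * (`|b i| + 1) < - a i by rewrite -ltr_pdivlMr // ltr_wpDl.
have : x * b i <= x * `|b i| by rewrite ler_wpM2l // ler_norm.
rewrite mulrDr mulr1; move: Hx; lra.
Qed.

End Poly1.

Section Cone.
Variables (R : realType) (d : nat) (Omega : finType).
Variable pi : nat -> Omega -> 'I_d -> 'I_d -> R.
Local Notation inK := (@inK R d Omega pi).

Lemma inK0 t w : inK t w 0.
Proof.
exists (fun _ => 0), (fun _ _ => 0); split => //.
by rewrite big1 ?add0r ?big1 // => j _; rewrite ?big1 ?scale0r // => k _; rewrite scale0r.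
Qed.

Lemma inKD t w u v : inK t w u -> inK t w v -> inK t w (u + v).
Proof.
case=> a1 [b1 [ha1 [hb1 ->]]] [a2 [b2 [ha2 [hb2 ->]]]].
exists (fun j => a1 j + a2 j), (fun j k => b1 j k + b2 j k); split.
  by move=> j; apply: addr_ge0.
split; first by move=> j k; apply: addr_ge0.
rewrite [\sum_j (_ + _) *: _](_ : _ = \sum_j a1 j *: @e R d j + \sum_j a2 j *: @e R d j); last first.
  by rewrite -big_split; apply: eq_bigr => j _; rewrite scalerDl.
rewrite [\sum_j \sum_k (_ + _) *: _](_ : _ = \sum_j \sum_k b1 j k *: (pi t w j k *: @e R d j - @e R d k)
   + \sum_j \sum_k b2 j k *: (pi t w j k *: @e R d j - @e R d k)); last first.
  rewrite -big_split; apply: eq_bigr => j _; rewrite -big_split; apply: eq_bigr => k _.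
  by rewrite scalerDl.
by rewrite addrACA.
Qed.

Lemma inKZ t w c u : 0 <= c -> inK t w u -> inK t w (c *: u).
Proof.
move=> c0 [a [b [ha [hb ->]]]].
exists (fun j => c * a j), (fun j k => c * b j k); split.
  by move=> j; apply: mulr_ge0.
split; first by move=> j k; apply: mulr_ge0.
rewrite scalerDr !scaler_sumr; congr (_ + _).
  by apply: eq_bigr => j _; rewrite scalerA.
apply: eq_bigr => j _; rewrite scaler_sumr; apply: eq_bigr => k _.
by rewrite scalerA.
Qed.

Lemma inK_sum (I : finType) (l : I -> R) (u : I -> vec R d) t w :
  (forall i, 0 <= l i) -> (forall i, inK t w (u i)) ->
  inK t w (\sum_i l i *: u i).
Proof.
move=> hl hu; apply: (big_ind (inK t w)); first exact: inK0.
  by move=> x y; apply: inKD.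
by move=> i _; apply: inKZ.
Qed.

Lemma inK_e t w j : inK t w (@e R d j).
Proof.
exists (fun k => (k == j)%:R), (fun _ _ => 0); split.
  by move=> k; rewrite ler0n.
split => //.
rewrite [X in _ = _ + X]big1 ?addr0; last first.
  by move=> k _; rewrite big1 // => l _; rewrite scale0r.
rewrite (bigD1 j) //= eqxx scale1r big1 ?addr0 // => k /negbTE ->.
by rewrite scale0r.
Qed.

End Cone.

Section NatSum.
Variable R : realType.
Lemma sum_nat_ge0 (G : nat -> R) m n :
  (forall i, (m <= i < n)%N -> 0 <= G i) -> 0 <= \sum_(m <= i < n) G i.
Proof.
move=> H; rewrite big_nat_cond; apply: sumr_ge0 => i /andP [hi _]; exact: H.
Qed.

Lemma le_sum_nat (G : nat -> R) m n s : (m <= s < n)%N ->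
  (forall i, (m <= i < n)%N -> 0 <= G i) -> G s <= \sum_(m <= i < n) G i.
Proof.
move=> /andP [ms sn] H.
rewrite (@big_cat_nat _ _ _ s) //= ?(ltnW sn) // [\sum_(s <= i < n) _]big_ltn //.
rewrite addrCA lerDl; apply: addr_ge0; apply: sum_nat_ge0 => i /andP [h1 h2];
  apply: H; apply/andP; split; lia.
Qed.

Lemma sum_nat_eq0 (G : nat -> R) m n s : (m <= s < n)%N ->
  (forall i, (m <= i < n)%N -> 0 <= G i) -> \sum_(m <= i < n) G i = 0 -> G s = 0.
Proof.
move=> hs H0 Hs; apply/eqP; rewrite eq_le; apply/andP; split.
  by rewrite -Hs; apply: le_sum_nat.
by apply: H0.
Qed.
End NatSum.

Section DP.
Variables (R : realType) (d : nat) (Omega : finType) (T : nat).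
Variable F : nat -> {set {set Omega}}.
Variable P : Omega -> R.
Variable pi : nat -> Omega -> 'I_d -> 'I_d -> R.
Variable xi : nat -> Omega -> vec R d.
Hypothesis hF : filtered_space T F P.
Hypothesis hxi : adapted T F xi.

Local Notation vec := (vec R d).
Local Notation inK := (@inK R d Omega pi).

Lemma hpart t : (t <= T)%N -> finset.partition (F t) [set: Omega]%SET.
Proof. by case: hF => _ [_ [H _]] /H. Qed.

Lemma hrefine t : (t < T)%N -> forall nu, nu \in F t.+1 -> exists2 mu, mu \in F t & nu \subset mu.
Proof. by case: hF => _ [_ [_ [H _]]] /H. Qed.

Lemma cover_atom t w : (t <= T)%N -> exists2 l, l \in F t & w \in l.
Proof.
move=> /hpart /and3P [/eqP hc _ _].
have : w \in finset.cover (F t) by rewrite hc inE.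
by move/finset.bigcupP.
Qed.

Lemma atom_uniq t l1 l2 w : (t <= T)%N -> l1 \in F t -> l2 \in F t ->
  w \in l1 -> w \in l2 -> l1 = l2.
Proof.
move=> /hpart /and3P [_ /finset.trivIsetP htr _] h1 h2 w1 w2.
apply/eqP; apply/negPn/negP => /(htr _ _ h1 h2) hd.
by move: (disjointFr hd w1); rewrite w2.
Qed.

Lemma atom_ne t l : (t <= T)%N -> l \in F t -> exists w, w \in l.
Proof.
move=> /hpart /and3P [_ _ h0] hl; apply/set0Pn.
by apply/negP => /eqP e; move: h0; rewrite -e hl.
Qed.

Lemma atom_in t s l mu w : (t <= s <= T)%N -> l \in F s -> mu \in F t ->
  w \in l -> w \in mu -> l \subset mu.
Proof.
elim: s l w => [|s IH] l w /andP [ts sT] hl hmu wl wmu.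
  have t0 : t = 0%N by lia.
  subst t; by rewrite (atom_uniq (leq0n T) hl hmu wl wmu).
case: (eqVneq t s.+1) => [e|ne].
  subst t; by rewrite (atom_uniq sT hl hmu wl wmu).
have [l' hl' sub] := hrefine sT hl.
have wl' : w \in l' by apply: (fintype.subsetP sub).
apply: fintype.subset_trans sub _.
apply: (IH l' w) => //; apply/andP; split; lia.
Qed.

Definition rmeas {A : Type} s (mu : {set Omega}) (f : Omega -> A) :=
  forall l, l \in F s -> l \subset mu -> forall w1 w2, w1 \in l -> w2 \in l -> f w1 = f w2.

Lemma meas_rmeas {A : Type} s (mu : {set Omega}) (f : Omega -> A) : meas F s f -> rmeas s mu f.
Proof. by move=> H l hl _; apply: H. Qed.

Lemma rmeas_sub {A : Type} s (mu nu : {set Omega}) (f : Omega -> A) :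
  rmeas s mu f -> nu \subset mu -> rmeas s nu f.
Proof. by move=> H sub l hl lnu; apply: H => //; apply: fintype.subset_trans sub. Qed.

Lemma rmeas_atom {A : Type} t (mu : {set Omega}) (f : Omega -> A) w1 w2 : (t <= T)%N -> mu \in F t ->
  rmeas t mu f -> w1 \in mu -> w2 \in mu -> f w1 = f w2.
Proof. by move=> _ hmu H; apply: H => //; apply: fintype.subxx. Qed.

Lemma const_rmeas {A : Type} s (mu : {set Omega}) (f : Omega -> A) :
  (forall w1 w2, w1 \in mu -> w2 \in mu -> f w1 = f w2) -> rmeas s mu f.
Proof.
by move=> H l hl sub w1 w2 h1 h2; apply: H; apply: (fintype.subsetP sub).
Qed.

Lemma rmeas_fam {A B : Type} (I : Type) s (mu : {set Omega}) (f : I -> Omega -> A) (h : (I -> A) -> B) :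
  (forall i, rmeas s (mu : {set Omega}) (f i)) -> rmeas s mu (fun w => h (fun i => f i w)).
Proof.
move=> H l hl sub w1 w2 h1 h2.
suff -> : (fun i => f i w1) = (fun i => f i w2) by [].
by apply: funext => i; apply: (H i l hl sub).
Qed.

Lemma rmeas2 {A B C : Type} s (mu : {set Omega}) (f : Omega -> A) (g : Omega -> B) (h : A -> B -> C) :
  rmeas s mu f -> rmeas s mu g -> rmeas s mu (fun w => h (f w) (g w)).
Proof. by move=> Hf Hg l hl sub w1 w2 h1 h2; rewrite (Hf l hl sub w1 w2) // (Hg l hl sub w1 w2). Qed.

Lemma rmeas1 {A C : Type} s (mu : {set Omega}) (f : Omega -> A) (h : A -> C) :
  rmeas s mu f -> rmeas s mu (fun w => h (f w)).
Proof. by move=> Hf l hl sub w1 w2 h1 h2; rewrite (Hf l hl sub w1 w2). Qed.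

Lemma rmeas_ext {A : Type} (z : A) t s (mu : {set Omega}) (f : Omega -> A) : (t <= s <= T)%N -> mu \in F t ->
  rmeas s mu f -> meas F s (fun w => if w \in mu then f w else z).
Proof.
move=> ts hmu H l hl w1 w2 h1 h2.
case: (boolP (w1 \in mu)) => m1.
  have sub := atom_in ts hl hmu h1 m1.
  by rewrite (fintype.subsetP sub _ h2); exact: (H l hl sub w1 w2 h1 h2).
case: (boolP (w2 \in mu)) => m2 //.
by move: m1; rewrite (fintype.subsetP (atom_in ts hl hmu h2 m2) _ h1).
Qed.


Definition Qrel t (mu : {set Omega}) (q : vec) := exists y : nat -> Omega -> vec,
  [/\ (forall s, (t < s <= T.+1)%N -> rmeas s.-1 mu (y s)),
      (forall w, w \in mu -> y T.+1 w = 0),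
      (forall w, w \in mu -> inK t w (q - y t.+1 w)) &
      (forall s, (t < s <= T)%N -> forall w, w \in mu -> inK s w (y s w - y s.+1 w))].

Lemma Qnode_rel t (mu : {set Omega}) q : (t <= T)%N -> mu \in F t ->
  Qnode T F pi t mu q <-> Qrel t mu q.
Proof.
move=> tT hmu; split.
  case=> z [[mz [y [my [y0 [yt ys]]]]] zq].
  exists y; split.
  - by move=> s hs; apply: meas_rmeas; apply: my.
  - by move=> w _; apply: y0.
  - by move=> w wm; rewrite -(zq w wm); apply: yt.
  - by move=> s hs w _; apply: ys.
case=> y [my y0 yt ys].
exists (fun w => if w \in mu then q else 0); split; last first.
  by move=> w ->.
split.
  apply: (@rmeas_ext _ 0 t t mu (fun _ => q)) => //; first by apply/andP; split.
exists (fun s w => if w \in mu then y s w else 0); split.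
  move=> s /andP [ts sT]; apply: (@rmeas_ext _ 0 t s.-1 mu) => //; last by apply: my; apply/andP.
  apply/andP; split; lia.
split; first by move=> w; case: ifP => // /y0.
split.
  move=> w; case: ifP => wm; first exact: yt.
  by rewrite subrr; apply: inK0.
move=> s hs w; case: ifP => wm; first exact: ys.
by rewrite subrr; apply: inK0.
Qed.

Lemma K_Q t (mu : {set Omega}) k : (t <= T)%N -> mu \in F t ->
  (forall w, w \in mu -> inK t w k) -> Qnode T F pi t mu k.
Proof.
move=> tT hmu hk; apply/Qnode_rel => //.
exists (fun _ _ => 0); split.
- by move=> s _ ? ? ? ? ? _ _.
- by [].
- by move=> w wm; rewrite subr0; apply: hk.
- by move=> s _ w _; rewrite subrr; apply: inK0.
Qed.

Definition hedgeYC t (mu : {set Omega}) (x : vec) (y : nat -> Omega -> vec) (chi : nat -> Omega -> R) :=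
  (forall s, (t < s <= T.+1)%N -> rmeas s.-1 mu (y s)) /\
  (forall s, (t <= s <= T)%N -> rmeas s mu (chi s)) /\
  (forall w, w \in mu -> y t w = x) /\
  (forall w, w \in mu -> y T.+1 w = 0) /\
  (forall s w, (t <= s <= T)%N -> w \in mu -> 0 <= chi s w) /\
  (forall w, w \in mu -> \sum_(t <= s < T.+1) chi s w = 1) /\
  (forall s w, (t <= s <= T)%N -> w \in mu ->
      inK s w (y s w + chi s w *: xi s w - y s.+1 w)).

Definition hedge t (mu : {set Omega}) x := exists y chi, hedgeYC t mu x y chi.

Lemma U_hedge t (mu : {set Omega}) x : (t <= T)%N -> mu \in F t ->
  Ubd T F pi xi t mu x -> hedge t mu x.
Proof.
move=> tT hmu [q [/(Qnode_rel q tT hmu) [yq [my y0 yt ys]] hx]].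
exists (fun s w => if s == t then x else yq s w), (fun s _ => (s == t)%:R).
split.
  move=> s /andP [ts sT] /=; rewrite (gtn_eqF ts); by apply: my; rewrite ts sT.
split; first by move=> s _; move=> ? ? ? ? ? _ _.
split; first by move=> w _ /=; rewrite eqxx.
split; first by move=> w wm /=; rewrite gtn_eqF ?ltnS //; apply: y0.
split; first by move=> s w _ _; rewrite ler0n.
split.
  move=> w wm /=; rewrite big_ltn ?ltnS // eqxx.
  rewrite big_nat_cond big1 ?addr0 // => s /andP [/andP [hs _] _].
  by rewrite gtn_eqF.
move=> s w /andP [ts sT] wm.
have -> : (s.+1 == t) = false by rewrite gtn_eqF // ltnS.
case: eqP => [est|/eqP nst].
  subst s; rewrite scale1r (hx w wm).
  by rewrite [- xi t w + q]addrC subrK; apply: yt.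
rewrite scale0r addr0; apply: ys => //; apply/andP; split => //; lia.
Qed.

Lemma hedge_U t (mu : {set Omega}) x y chi : (t <= T)%N -> mu \in F t ->
  hedgeYC t mu x y chi -> (forall w, w \in mu -> chi t w = 1) -> Ubd T F pi xi t mu x.
Proof.
move=> tT hmu [my [mc [yt [y0 [c0 [cs hK]]]]]] c1.
have [w0 w0m] := atom_ne tT hmu.
have xic : forall w, w \in mu -> xi t w = xi t w0.
  by move=> w wm; apply: (hxi tT hmu).
have czero : forall s w, (t < s <= T)%N -> w \in mu -> chi s w = 0.
  move=> s w hs wm; apply: (@sum_nat_eq0 _ (chi^~ w) t.+1 T.+1).
  - by move: hs; lia.
  - by move=> i /andP [h1 h2]; apply: c0 => //; apply/andP; split; lia.
  - have := cs w wm; rewrite big_ltn ?ltnS // c1 // => H.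
    by apply: (@addrI _ 1); rewrite addr0.
exists (x + xi t w0); split.
  apply/Qnode_rel => //; exists y; split.
  - by move=> s hs; apply: my.
  - exact: y0.
  - move=> w wm; have := hK t w _ wm; rewrite c1 // scale1r yt // xic //.
    by apply; rewrite leqnn tT.
  - move=> s hs w wm; have := hK s w _ wm; rewrite czero // scale0r addr0.
    by apply; apply/andP; split; lia.
by move=> w wm; rewrite xic // addrCA addNr addr0.
Qed.


Lemma hedge_conv t (mu : {set Omega}) n (p : 'I_n -> vec) (l : 'I_n -> R) :
  (forall i, hedge t mu (p i)) -> (forall i, 0 <= l i) -> \sum_i l i = 1 ->
  hedge t mu (\sum_i l i *: p i).
Proof.
move=> hp hl hs.
have : forall i, exists yc : (nat -> Omega -> vec) * (nat -> Omega -> R),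
    hedgeYC t mu (p i) yc.1 yc.2.
  by move=> i; case: (hp i) => y [chi H]; exists (y, chi).
case/choice => Y HY.
exists (fun s w => \sum_i l i *: (Y i).1 s w), (fun s w => \sum_i l i * (Y i).2 s w).
split.
  move=> s hs'; apply: (@rmeas_fam _ _ _ _ _ (fun i w => (Y i).1 s w) (fun g => \sum_i l i *: g i)).
  by move=> i; case: (HY i) => H _; apply: H.
split.
  move=> s hs'; apply: (@rmeas_fam _ _ _ _ _ (fun i w => (Y i).2 s w) (fun g => \sum_i l i * g i)).
  by move=> i; case: (HY i) => _ [H _]; apply: H.
split.
  move=> w wm /=; apply: eq_bigr => i _; congr (_ *: _).
  by case: (HY i) => _ [_ [H _]]; apply: H.
split.
  move=> w wm /=; rewrite big1 // => i _.
  by case: (HY i) => _ [_ [_ [H _]]]; rewrite H // scaler0.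
split.
  move=> s w hs' wm /=; apply: sumr_ge0 => i _; apply: mulr_ge0 => //.
  by case: (HY i) => _ [_ [_ [_ [H _]]]]; apply: H.
split.
  move=> w wm /=; rewrite exchange_big /= -[RHS]hs; apply: eq_bigr => i _.
  rewrite -mulr_sumr; case: (HY i) => _ [_ [_ [_ [_ [H _]]]]].
  by rewrite H // mulr1.
move=> s w hs' wm /=.
have -> : \sum_i l i *: (Y i).1 s w + (\sum_i l i * (Y i).2 s w) *: xi s w
     - \sum_i l i *: (Y i).1 s.+1 w
   = \sum_i l i *: ((Y i).1 s w + (Y i).2 s w *: xi s w - (Y i).1 s.+1 w).
  rewrite scaler_suml -big_split -sumrB /=; apply: eq_bigr => i _.
  by rewrite scalerBr scalerDr scalerA.
apply: inK_sum => // i.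
by case: (HY i) => _ [_ [_ [_ [_ [_ H]]]]]; apply: H.
Qed.

Definition nuf t w := odflt finset.set0 [pick nu in F t.+1 | w \in nu].

Lemma nufP t w : (t < T)%N -> nuf t w \in F t.+1 /\ w \in nuf t w.
Proof.
move=> tT; rewrite /nuf; case: pickP => [nu /andP [h1 h2]|H] //=.
have [l hl wl] := cover_atom w tT.
by move: (H l); rewrite hl wl.
Qed.

Lemma nuf_uniq t w nu : (t < T)%N -> nu \in F t.+1 -> w \in nu -> nuf t w = nu.
Proof.
move=> tT h1 h2; have [h3 h4] := nufP w tT.
exact: (atom_uniq tT h3 h1 h4 h2).
Qed.

Lemma V_hedge t (mu : {set Omega}) wv q : (t < T)%N -> mu \in F t ->
  (forall nu, nu \in F t.+1 -> nu \subset mu -> hedge t.+1 nu wv) ->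
  Qnode T F pi t mu q -> hedge t mu (wv + q).
Proof.
move=> tT hmu hW /(Qnode_rel q (ltnW tT) hmu) [yq [my y0 yt ys]].
have : forall nu : {set Omega}, exists yc : (nat -> Omega -> vec) * (nat -> Omega -> R),
    nu \in F t.+1 -> nu \subset mu -> hedgeYC t.+1 nu wv yc.1 yc.2.
  move=> nu; case: (boolP ((nu \in F t.+1) && (nu \subset mu))) => [/andP [h1 h2]|h].
    by case: (hW nu h1 h2) => y [chi H]; exists (y, chi).
  by exists ((fun _ _ => 0), (fun _ _ => 0)) => h1 h2; move: h; rewrite h1 h2.
case/choice => Y HY.
pose N w := nuf t w.
have HN : forall w, w \in mu -> [/\ N w \in F t.+1, w \in N w &
    hedgeYC t.+1 (N w) wv (Y (N w)).1 (Y (N w)).2].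
  move=> w wm; have [h1 h2] := nufP w tT; split => //; apply: HY => //.
  by apply: (atom_in _ h1 hmu h2 wm); apply/andP; split; lia.
have HNl : forall s l w1 w2, (t < s <= T)%N -> l \in F s -> l \subset mu ->
    w1 \in l -> w2 \in l -> N w2 = N w1 /\ l \subset N w1.
  move=> s l w1 w2 hs hl lsub h1 h2.
  have w1m : w1 \in mu by apply: (fintype.subsetP lsub).
  have [h3 h4 _] := HN w1 w1m.
  have sub : l \subset N w1 by apply: (atom_in hs hl h3 h1 h4).
  split => //; apply: nuf_uniq => //; exact: (fintype.subsetP sub).
exists (fun s w => if s == t then wv + q else (Y (N w)).1 s w + yq s w),
       (fun s w => if s == t then 0 else (Y (N w)).2 s w).
split.
  move=> s /andP [ts sT] l hl lsub w1 w2 h1 h2 /=; rewrite (gtn_eqF ts).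
  have w1m : w1 \in mu by apply: (fintype.subsetP lsub).
  have w2m : w2 \in mu by apply: (fintype.subsetP lsub).
  congr (_ + _); last by apply: (my s _ l hl lsub w1 w2 h1 h2); rewrite ts sT.
  case: (eqVneq s t.+1) => [es|ne].
    subst s; have [_ i1 [_ [_ [H1 _]]]] := HN w1 w1m; have [_ i2 [_ [_ [H2 _]]]] := HN w2 w2m.
    by rewrite H1 // H2.
  have [e sub] := HNl s.-1 l w1 w2 ltac:(apply/andP; split; lia) hl lsub h1 h2.
  rewrite e; have [_ _ [H _]] := HN w1 w1m.
  apply: (H s _ l hl sub) => //; apply/andP; split; lia.
split.
  move=> s /andP [ts sT] l hl lsub w1 w2 h1 h2 /=.
  case: eqP => // /eqP ne.
  have w1m : w1 \in mu by apply: (fintype.subsetP lsub).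
  have [e sub] := HNl s l w1 w2 ltac:(apply/andP; split; lia) hl lsub h1 h2.
  rewrite e; have [_ _ [_ [H _]]] := HN w1 w1m.
  apply: (H s _ l hl sub) => //; apply/andP; split; lia.
split; first by move=> w wm /=; rewrite eqxx.
split.
  move=> w wm /=; have -> : (T.+1 == t) = false by apply/negbTE; lia.
  have [_ i1 [_ [_ [_ [H _]]]]] := HN w wm.
  by rewrite H // y0 // addr0.
split.
  move=> s w /andP [ts sT] wm /=; case: eqP => // /eqP ne.
  have [_ i1 [_ [_ [_ [_ [H _]]]]]] := HN w wm.
  apply: H => //; apply/andP; split; lia.
split.
  move=> w wm /=; rewrite big_ltn; last lia.
  rewrite eqxx add0r.
  have [_ i1 [_ [_ [_ [_ [_ [H _]]]]]]] := HN w wm.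
  rewrite -(H w i1); apply: eq_big_nat => s /andP [h1 h2].
  by rewrite gtn_eqF.
move=> s w /andP [ts sT] wm /=.
have -> : (s.+1 == t) = false by apply/negbTE; lia.
have [_ i1 [_ [_ [Hyt [_ [_ [_ HK]]]]]]] := HN w wm.
case: eqP => [es|/eqP ne].
  subst s; rewrite scale0r addr0 Hyt // opprD addrACA subrr add0r.
  exact: yt.
have -> : (Y (N w)).1 s w + yq s w + (Y (N w)).2 s w *: xi s w - ((Y (N w)).1 s.+1 w + yq s.+1 w)
   = ((Y (N w)).1 s w + (Y (N w)).2 s w *: xi s w - (Y (N w)).1 s.+1 w) + (yq s w - yq s.+1 w).
  by rewrite opprD !addrA; congr (_ + _); rewrite -!addrA; congr (_ + _);
     rewrite addrC -!addrA; congr (_ + _); rewrite addrC.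
apply: inKD.
  by apply: HK => //; apply/andP; split; lia.
by apply: ys => //; apply/andP; split; lia.
Qed.


Lemma hedge_sub t (mu : {set Omega}) x y chi w0 : (t < T)%N -> mu \in F t ->
  hedgeYC t mu x y chi -> w0 \in mu -> chi t w0 < 1 ->
  forall nu, nu \in F t.+1 -> nu \subset mu ->
  hedge t.+1 nu ((1 - chi t w0)^-1 *: y t.+1 w0).
Proof.
move=> tT hmu [my [mc [yt [y0 [c0 [cs hK]]]]]] w0m c1 nu hnu sub.
set c := chi t w0.
have cpos : 0 < 1 - c by rewrite subr_gt0.
have cinv : 0 <= (1 - c)^-1 by rewrite invr_ge0 ltW.
have cc : forall w, w \in mu -> chi t w = c.
  by move=> w wm; apply: (rmeas_atom (ltnW tT) hmu (mc t ltac:(apply/andP; split; lia))).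
have yc : forall w, w \in mu -> y t.+1 w = y t.+1 w0.
  by move=> w wm; apply: (rmeas_atom (ltnW tT) hmu (my t.+1 ltac:(apply/andP; split; lia))).
exists (fun s w => (1 - c)^-1 *: y s w), (fun s w => (1 - c)^-1 * chi s w).
split.
  move=> s hs; apply: (rmeas1 (fun v => (1 - c)^-1 *: v)).
  by apply: (rmeas_sub _ sub); apply: my; move: hs; lia.
split.
  move=> s hs; apply: (rmeas1 (fun v => (1 - c)^-1 * v)).
  by apply: (rmeas_sub _ sub); apply: mc; move: hs; lia.
split.
  by move=> w wn /=; rewrite yc //; apply: (fintype.subsetP sub).
split.
  by move=> w wn /=; rewrite y0 ?scaler0 //; apply: (fintype.subsetP sub).
split.
  move=> s w hs wn /=; apply: mulr_ge0 => //; apply: c0; first by move: hs; lia.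
  exact: (fintype.subsetP sub).
split.
  move=> w wn /=; have wm : w \in mu by apply: (fintype.subsetP sub).
  rewrite -mulr_sumr; have := cs w wm; rewrite big_ltn; last lia.
  rewrite cc // => H.
  have -> : \sum_(t.+1 <= i < T.+1) chi i w = 1 - c by rewrite -H addrC addKr.
  by rewrite mulVf // gt_eqF.
move=> s w hs wn /=; have wm : w \in mu by apply: (fintype.subsetP sub).
have -> : (1 - c)^-1 *: y s w + (1 - c)^-1 * chi s w *: xi s w - (1 - c)^-1 *: y s.+1 w
    = (1 - c)^-1 *: (y s w + chi s w *: xi s w - y s.+1 w).
  by rewrite scalerBr scalerDr scalerA.
apply: inKZ => //; apply: hK => //; move: hs; lia.
Qed.

Lemma conv1 (A : set vec) a : A a -> conv A a.
Proof.
move=> Ha; exists 1%N, (fun _ => a), (fun _ => 1); split => //; split.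
  by move=> _; rewrite ler01.
by rewrite big_ord1; split => //; rewrite big_ord1 scale1r.
Qed.

Lemma conv2 (A : set vec) a b c : A a -> A b -> 0 <= c <= 1 ->
  conv A (c *: a + (1 - c) *: b).
Proof.
move=> Ha Hb /andP [c0 c1].
exists 2%N, (fun i : 'I_2 => if nat_of_ord i == 0%N then a else b),
  (fun i : 'I_2 => if nat_of_ord i == 0%N then c else 1 - c); split.
  by move=> i; case: ifP.
split; first by move=> i; case: ifP => _ //; rewrite subr_ge0.
by rewrite !big_ord_recl !big_ord0 /= !addr0; split => //; rewrite addrC subrK.
Qed.

Lemma Zrec_hedge n : forall t (mu : {set Omega}), (t + n)%N = T -> mu \in F t ->
  forall x, Zrec T F pi xi n t mu x <-> hedge t mu x.
Proof.
elim: n => [|n IH] t mu htn hmu x.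
  rewrite addn0 in htn; subst t => /=; split.
    by apply: U_hedge.
  case=> y [chi H]; apply: (hedge_U (y := y) (chi := chi)) => //.
  case: H => _ [_ [_ [_ [_ [cs _]]]]] w wm.
  by have := cs w wm; rewrite big_nat1.
have tT : (t < T)%N by lia.
have hIH : forall nu v, nu \in F t.+1 -> Zrec T F pi xi n t.+1 nu v <-> hedge t.+1 nu v.
  by move=> nu v hnu; apply: IH => //; lia.
rewrite /=; split.
  case=> m [p [l [hp [hl [hs ->]]]]]; apply: hedge_conv => // i.
  case: (hp i) => [hU|[a [b [hWa [hQb ->]]]]].
    by apply: U_hedge => //; apply: ltnW.
  apply: V_hedge => // nu h1 h2; apply/hIH => //; exact: hWa.
case=> y [chi H].
have H' := H; case: H' => my [mc [yt [y0 [c0 [cs hK]]]]].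
have [w0 w0m] := atom_ne (ltnW tT) hmu.
set c := chi t w0.
have cc : forall w, w \in mu -> chi t w = c.
  by move=> w wm; apply: (rmeas_atom (ltnW tT) hmu (mc t ltac:(apply/andP; split; lia))).
have c1 : c <= 1.
  rewrite -(cs w0 w0m); apply: (@le_sum_nat _ (chi^~ w0)); first by apply/andP; split; lia.
  by move=> i hi; apply: c0.
have cge0 : 0 <= c by apply: c0 => //; apply/andP; split; lia.
case: (eqVneq c 1) => [ec|nc].
  apply: conv1; left; apply: (hedge_U (y := y) (chi := chi)) => //; first exact: ltnW.
  by move=> w wm; rewrite cc.
have clt : c < 1 by rewrite lt_neqAle nc.
set wv := (1 - c)^-1 *: y t.+1 w0.
have hW : forall nu, nu \in F t.+1 -> nu \subset mu -> Zrec T F pi xi n t.+1 nu wv.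
  by move=> nu h1 h2; apply/hIH => //; apply: (hedge_sub tT hmu H w0m clt).
have xic : forall w, w \in mu -> xi t w = xi t w0.
  by move=> w wm; apply: (hxi (ltnW tT) hmu).
have yc : forall w, w \in mu -> y t.+1 w = y t.+1 w0.
  by move=> w wm; apply: (rmeas_atom (ltnW tT) hmu (my t.+1 ltac:(apply/andP; split; lia))).
set k := x + c *: xi t w0 - y t.+1 w0.
have hk : forall w, w \in mu -> inK t w k.
  move=> w wm; have := hK t w _ wm; rewrite (yt w wm) cc // xic // yc //.
  by apply; apply/andP; split; lia.
have hQ : forall k', (forall w, w \in mu -> inK t w k') -> Qnode T F pi t mu k'.
  by move=> k' hk'; apply: K_Q => //; apply: ltnW.
case: (eqVneq c 0) => [c0'|cn0].
  apply: conv1; right; exists wv, k; split => //; split; first exact: hQ.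
  rewrite /wv /k c0' subr0 invr1 scale1r scale0r addr0.
  by rewrite addrC subrK.
have cpos : 0 < c by rewrite lt_neqAle eq_sym cn0.
set u := - xi t w0 + c^-1 *: k.
have -> : x = c *: u + (1 - c) *: (wv + 0).
  rewrite addr0 /wv /u scalerA mulfV ?subr_eq0 1?eq_sym // scale1r.
  rewrite scalerDr scalerA mulfV ?gt_eqF // scale1r /k.
  by rewrite scalerN -addrA subrK addrCA addNr addr0.
apply: conv2; last by rewrite cge0 c1.
  left; exists (c^-1 *: k); split.
    by apply: hQ => w wm; apply: inKZ; [rewrite invr_ge0 | apply: hk].
  by move=> w wm; rewrite xic.
right; exists wv, 0; split => //; split => //.
by apply: hQ => w _; apply: inK0.
Qed.


Lemma rmeas_setT {A : Type} s (f : Omega -> A) : rmeas s [set: Omega]%SET f -> meas F s f.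
Proof. by move=> H l hl; apply: H => //; apply: fintype.subset_predT. Qed.

Lemma hedge_init x : hedge 0 [set: Omega]%SET x <-> init_bg T F pi xi x.
Proof.
split.
  case=> y [chi [my [mc [yt [y0 [c0 [cs hK]]]]]]].
  exists y, chi; split; last by move=> w; apply: yt; rewrite inE.
  split.
    split; first by move=> l hl w1 w2 _ _; rewrite !yt ?inE.
    split; first by move=> t ht; apply: rmeas_setT; apply: my.
    by move=> w; apply: y0; rewrite inE.
  split.
    split; first by move=> t ht; apply: rmeas_setT; apply: mc.
    split.
      move=> t w ht; apply/andP; split; first by apply: c0; rewrite ?inE.
      rewrite -(cs w ltac:(by rewrite inE)); apply: (@le_sum_nat _ (chi^~ w)).
        by rewrite ltnS ht.
      by move=> i hi; apply: c0; rewrite ?inE.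
    by move=> w; rewrite -(big_mkord xpredT (fun i => chi i w)); apply: cs; rewrite inE.
  by move=> t ht w; apply: hK; rewrite ?inE.
case=> y [chi [[[my0 [my y0]] [[mc [c01 cs]] hK]] yt]].
exists y, chi; split; first by move=> s hs; apply: meas_rmeas; apply: my.
split; first by move=> s hs; apply: meas_rmeas; apply: mc.
split; first by move=> w _; apply: yt.
split; first by move=> w _; apply: y0.
split; first by move=> s w hs _; case/andP: (c01 s w hs).
split; first by move=> w _; rewrite (big_mkord xpredT (fun i => chi i w)); apply: cs.
by move=> s w hs _; apply: hK.
Qed.

Lemma Zbd0_init : Zbd0 T F pi xi = init_bg T F pi xi.
Proof.
apply: funext => x; apply: propext.
have h0 : [set: Omega]%SET \in F 0.
  by case: hF => _ [_ [_ [_ [-> _]]]]; rewrite inE.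
rewrite /Zbd0 (Zrec_hedge (t := 0%N) _ h0) //.
exact: hedge_init.
Qed.

End DP.

Section Comp.
Variables (R : realType) (d : nat).

Lemma sum_delta (G : 'I_d -> R) i : \sum_j G j * (i == j)%:R = G i.
Proof.
rewrite (bigD1 i) //= eqxx mulr1 big1 ?addr0 // => k; rewrite eq_sym => /negbTE ->.
by rewrite mulr0.
Qed.
Lemma compK (a : 'I_d -> R) (b : 'I_d -> 'I_d -> R) (p : 'I_d -> 'I_d -> R) i :
  (\sum_j a j *: @e R d j + \sum_j \sum_k b j k *: (p j k *: @e R d j - @e R d k)) 0 i
  = a i + \sum_k b i k * p i k - \sum_j b j i.
Proof.
rewrite mxE !summxE.
under eq_bigr => j _ do rewrite !mxE eqxx andTb.
rewrite sum_delta -addrA; congr (_ + _).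
under eq_bigr => j _ do (rewrite summxE; under eq_bigr => k _ do rewrite !mxE eqxx !andTb mulrBr).
under eq_bigr => j _ do rewrite sumrB.
rewrite sumrB; congr (_ - _).
  rewrite exchange_big /=; apply: eq_bigr => k _.
  under eq_bigr => j _ do rewrite mulrA.
  by rewrite sum_delta.
apply: eq_bigr => j _.
by rewrite sum_delta.
Qed.
Lemma eE j i : (@e R d j) 0 i = (j == i)%:R.
Proof. by rewrite /e mxE eqxx eq_sym. Qed.
End Comp.

Section Enc.
Variables (R : realType) (d : nat) (Omega : finType) (T : nat).
Variable F : nat -> {set {set Omega}}.
Variable pi : nat -> Omega -> 'I_d -> 'I_d -> R.
Variable xi : nat -> Omega -> vec R d.
Variable j : 'I_d.

Local Notation vec := (vec R d).
Local Notation inK := (@inK R d Omega pi).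

Definition sameF s (w1 w2 : Omega) := [exists l in F s, (w1 \in l) && (w2 \in l)].

Lemma sameFP s w1 w2 l : l \in F s -> w1 \in l -> w2 \in l -> sameF s w1 w2.
Proof. by move=> h1 h2 h3; apply/existsP; exists l; rewrite h1 h2 h3. Qed.

Lemma sameF_ex s w1 w2 : sameF s w1 w2 -> exists l, [/\ l \in F s, w1 \in l & w2 \in l].
Proof. by case/existsP => l /andP [h1 /andP [h2 h3]]; exists l. Qed.

Definition Gx (x eps : R) := exists (y : nat -> Omega -> vec) (chi : nat -> Omega -> R),
  [/\ is_strategy T F y, (forall w, y 0%N w = x *: @e R d j),
      (forall t, (t <= T)%N -> meas F t (chi t)) /\ (forall t w, (t <= T)%N -> 0 <= chi t w),
      (forall w, \sum_(t < T.+1) chi t w = eps) &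
      (forall t, (t <= T)%N -> forall w, inK t w (y t w + chi t w *: xi t w - y t.+1 w))].

Definition Vt : finType := ((('I_T.+2 * Omega * 'I_d) + ('I_T.+1 * Omega)) +
  (('I_T.+1 * Omega * 'I_d) + ('I_T.+1 * Omega * 'I_d * 'I_d)) + bool)%type.

Definition vY (s : 'I_T.+2) w i : Vt := inl (inl (inl (s, w, i))).
Definition vC (s : 'I_T.+1) w : Vt := inl (inl (inr (s, w))).
Definition vA (s : 'I_T.+1) w i : Vt := inl (inr (inl (s, w, i))).
Definition vB (s : 'I_T.+1) w i k : Vt := inl (inr (inr (s, w, i, k))).
Definition vX : Vt := inr true.
Definition vE : Vt := inr false.

Definition Ieq : finType := (('I_T.+1 * Omega * Omega * 'I_d) + ((Omega * 'I_d) +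
  (('I_T.+1 * Omega * Omega) + (Omega + (('I_T.+1 * Omega * 'I_d) + (Omega * 'I_d))))))%type.
Definition Iin : finType := (('I_T.+1 * Omega) + (('I_T.+1 * Omega * 'I_d) +
  ('I_T.+1 * Omega * 'I_d * 'I_d)))%type.
Definition Ix : finType := ((Ieq * bool) + Iin)%type.

Definition g1 (p : 'I_T.+1 * Omega * Omega * 'I_d) (v : Vt -> R) : R :=
  if sameF p.1.1.1 p.1.1.2 p.1.2 then
    v (vY (inord p.1.1.1.+1) p.1.1.2 p.2) - v (vY (inord p.1.1.1.+1) p.1.2 p.2) else 0.
Definition g2 (p : Omega * 'I_d) (v : Vt -> R) : R := v (vY (inord T.+1) p.1 p.2).
Definition g3 (p : 'I_T.+1 * Omega * Omega) (v : Vt -> R) : R :=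
  if sameF p.1.1 p.1.2 p.2 then v (vC p.1.1 p.1.2) - v (vC p.1.1 p.2) else 0.
Definition g4 (w : Omega) (v : Vt -> R) : R := \sum_(s < T.+1) v (vC s w) - v vE.
Definition g5 (p : 'I_T.+1 * Omega * 'I_d) (v : Vt -> R) : R :=
  let s := p.1.1 in let w := p.1.2 in let i := p.2 in
  v (vY (inord s) w i) + v (vC s w) * xi s w 0 i - v (vY (inord s.+1) w i)
  - (v (vA s w i) + \sum_k v (vB s w i k) * pi s w i k - \sum_k v (vB s w k i)).
Definition g6 (p : Omega * 'I_d) (v : Vt -> R) : R :=
  v (vY (inord 0) p.1 p.2) - v vX * (p.2 == j)%:R.

Definition geq (q : Ieq) : (Vt -> R) -> R :=
  match q with
  | inl p => g1 p
  | inr (inl p) => g2 p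
  | inr (inr (inl p)) => g3 p
  | inr (inr (inr (inl p))) => g4 p
  | inr (inr (inr (inr (inl p)))) => g5 p
  | inr (inr (inr (inr (inr p)))) => g6 p
  end.

Definition gin (q : Iin) : (Vt -> R) -> R :=
  match q with
  | inl p => fun v => v (vC p.1 p.2)
  | inr (inl p) => fun v => v (vA p.1.1 p.1.2 p.2)
  | inr (inr p) => fun v => v (vB p.1.1.1 p.1.1.2 p.1.2 p.2)
  end.

Definition gsys (q : Ix) : (Vt -> R) -> R :=
  match q with
  | inl p => if p.2 then geq p.1 else fun v => - geq p.1 v
  | inr q' => gin q'
  end.

Lemma caff_geq q : caff (geq q).
Proof.
case: q => [p|[p|[p|[p|[p|p]]]]].
- rewrite /= /g1; case: (sameF _ _ _); last exact: caff_cst.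
  by apply: caff_sub; apply: caff_var.
- exact: caff_var.
- rewrite /= /g3; case: (sameF _ _ _); last exact: caff_cst.
  by apply: caff_sub; apply: caff_var.
- apply: caff_sub; last exact: caff_var.
  by apply: caff_sum => s; apply: caff_var.
- rewrite /= /g5 /=.
  apply: caff_sub; first apply: caff_sub; first apply: caff_add.
  + exact: caff_var.
  + by apply: caff_mulc; apply: caff_var.
  + exact: caff_var.
  apply: caff_sub; first apply: caff_add.
  + exact: caff_var.
  + by apply: caff_sum => k; apply: caff_mulc; apply: caff_var.
  by apply: caff_sum => k; apply: caff_var.
- apply: caff_sub; first exact: caff_var.
  by apply: caff_mulc; apply: caff_var.
Qed.

Lemma caff_gsys q : caff (gsys q).
Proof.
case: q => [[q b]|[p|[p|p]]] /=; try exact: caff_var.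
by case: b; [apply: caff_geq | apply: caff_opp; apply: caff_geq].
Qed.

Lemma sat_split v : (forall q, 0 <= gsys q v) <->
  (forall q, geq q v = 0) /\ (forall q, 0 <= gin q v).
Proof.
split.
  move=> H; split; last by move=> q; apply: (H (inr q)).
  move=> q; have h1 := H (inl (q, true)); have h2 := H (inl (q, false)).
  by move: h1 h2 => /= h1; rewrite oppr_ge0 => h2; apply/eqP; rewrite eq_le h2 h1.
case=> H1 H2 [[q b]|q] /=; last exact: H2.
by case: b => /=; rewrite H1 ?oppr0.
Qed.


Lemma dec x eps v : v vX = x -> v vE = eps -> (forall q, geq q v = 0) ->
  (forall q, 0 <= gin q v) -> Gx x eps.
Proof.
move=> hX hE H1 H2.
have E1 : forall (s : 'I_T.+1) w1 w2 i, sameF s w1 w2 ->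
    v (vY (inord s.+1) w1 i) = v (vY (inord s.+1) w2 i).
  move=> s w1 w2 i hs; have := H1 (inl (s, w1, w2, i)).
  by rewrite /= /g1 /= hs => /eqP; rewrite subr_eq0 => /eqP.
have E2 : forall w i, v (vY (inord T.+1) w i) = 0 := fun w i => H1 (inr (inl (w, i))).
have E3 : forall (s : 'I_T.+1) w1 w2, sameF s w1 w2 -> v (vC s w1) = v (vC s w2).
  move=> s w1 w2 hs; have := H1 (inr (inr (inl (s, w1, w2)))).
  by rewrite /= /g3 /= hs => /eqP; rewrite subr_eq0 => /eqP.
have E4 : forall w, \sum_(s < T.+1) v (vC s w) = eps.
  move=> w; have := H1 (inr (inr (inr (inl w)))).
  by rewrite /= /g4 hE => /eqP; rewrite subr_eq0 => /eqP.
have E5 : forall (s : 'I_T.+1) w i,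
    v (vY (inord s) w i) + v (vC s w) * xi s w 0 i - v (vY (inord s.+1) w i)
    = v (vA s w i) + \sum_k v (vB s w i k) * pi s w i k - \sum_k v (vB s w k i).
  move=> s w i; have := H1 (inr (inr (inr (inr (inl (s, w, i)))))).
  by rewrite /= /g5 /= => /eqP; rewrite subr_eq0 => /eqP.
have E6 : forall w i, v (vY (inord 0) w i) = x * (i == j)%:R.
  move=> w i; have := H1 (inr (inr (inr (inr (inr (w, i)))))).
  by rewrite /= /g6 /= hX => /eqP; rewrite subr_eq0 => /eqP.
pose y s w : vec := \row_i v (vY (inord s) w i).
pose chi s w := v (vC (inord s) w).
exists y, chi; split.
- split.
    by move=> l hl w1 w2 _ _; apply/rowP => i; rewrite !mxE !E6.
  split.
    move=> t /andP [t1 tT] l hl w1 w2 h1 h2; apply/rowP => i; rewrite !mxE.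
    have ht : (t.-1 < T.+1)%N by lia.
    have := E1 (Ordinal ht) w1 w2 i (sameFP hl h1 h2).
    by rewrite /= (prednK t1).
  by move=> w; apply/rowP => i; rewrite !mxE E2.
- by move=> w; apply/rowP => i; rewrite !mxE E6 eqxx.
- split.
    move=> t ht l hl w1 w2 h1 h2; rewrite /chi.
    have := E3 (inord t) w1 w2; rewrite inordK ?ltnS //; apply.
    exact: (sameFP hl h1 h2).
  by move=> t w ht; rewrite /chi; apply: (H2 (inl (inord t, w))).
- by move=> w; rewrite -(E4 w); apply: eq_bigr => s _; rewrite /chi inord_val.
move=> t ht w.
exists (fun i => v (vA (inord t) w i)), (fun i k => v (vB (inord t) w i k)); split.
  by move=> i; apply: (H2 (inr (inl (inord t, w, i)))).
split.
  by move=> i k; apply: (H2 (inr (inr (inord t, w, i, k)))).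
apply/rowP => i; rewrite compK.
have := E5 (inord t) w i; rewrite inordK ?ltnS // => <-.
by rewrite /y /chi !mxE.
Qed.

Lemma enc x eps : Gx x eps -> exists v, [/\ v vX = x, v vE = eps & forall q, 0 <= gsys q v].
Proof.
case=> y [chi [[my0 [my y0]] hy0 [mc c0] cs hK]].
have : forall p : 'I_T.+1 * Omega, exists ab : ('I_d -> R) * ('I_d -> 'I_d -> R),
   [/\ forall i, 0 <= ab.1 i, forall i k, 0 <= ab.2 i k &
     y p.1 p.2 + chi p.1 p.2 *: xi p.1 p.2 - y p.1.+1 p.2 =
     \sum_i ab.1 i *: @e R d i + \sum_i \sum_k ab.2 i k *: (pi p.1 p.2 i k *: @e R d i - @e R d k)].
  move=> [s w]; have hs : (s <= T)%N by rewrite -ltnS ltn_ord.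
  by case: (hK s hs w) => a [b [ha [hb he]]]; exists (a, b).
case/choice => AB HAB.
have [v [vYE vCE vAE vBE [vXE vEE]]] : exists v : Vt -> R,
   [/\ (forall s w i, v (vY s w i) = y s w 0 i), (forall s w, v (vC s w) = chi s w),
       (forall s w i, v (vA s w i) = (AB (s, w)).1 i),
       (forall s w i k, v (vB s w i k) = (AB (s, w)).2 i k) &
       v vX = x /\ v vE = eps].
  by exists (fun u : Vt => match u with
  | inl (inl (inl p)) => y p.1.1 p.1.2 0 p.2
  | inl (inl (inr p)) => chi p.1 p.2
  | inl (inr (inl p)) => (AB (p.1.1, p.1.2)).1 p.2
  | inl (inr (inr p)) => (AB (p.1.1.1, p.1.1.2)).2 p.1.2 p.2
  | inr b => if b then x else eps
  end).
exists v; split => //; apply/sat_split; split.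
  case => [[[[s w1] w2] i]|[[w i]|[[[s w1] w2]|[w|[[[s w] i]|[w i]]]]]].
  - have hs := ltn_ord s.
    rewrite /= /g1 /=; case E: (sameF _ _ _) => //.
    have [l [hl h1 h2]] := sameF_ex E.
    rewrite !vYE inordK; last by rewrite ltnS.
    by rewrite (my s.+1 ltac:(apply/andP; split; lia) l hl w1 w2 h1 h2) subrr.
  - by rewrite /= /g2 /= vYE inordK // y0 mxE.
  - have hs := ltn_ord s.
    rewrite /= /g3 /=; case E: (sameF _ _ _) => //.
    have [l [hl h1 h2]] := sameF_ex E.
    by rewrite !vCE (mc s ltac:(lia) l hl w1 w2 h1 h2) subrr.
  - rewrite /= /g4 /= vEE.
    by under eq_bigr do rewrite vCE; rewrite cs subrr.
  - have hs := ltn_ord s.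
    rewrite /= /g5 /= !vYE !vCE vAE.
    under eq_bigr do rewrite vBE.
    under [\sum_(k < d) v (vB s w k i)]eq_bigr do rewrite vBE.
    rewrite !inordK; try lia.
    case: (HAB (s, w)) => _ _ /= he.
    have := congr1 (fun M : vec => M 0 i) he; rewrite compK !mxE => ->.
    by rewrite subrr.
  - by rewrite /= /g6 /= vYE vXE inordK // hy0 !mxE eqxx subrr.
case => [[s w]|[[[s w] i]|[[[s w] i] k]]] /=.
- by rewrite vCE; apply: c0; rewrite -ltnS ltn_ord.
- by rewrite vAE; case: (HAB (s, w)).
- by rewrite vBE; case: (HAB (s, w)).
Qed.


Lemma poly_pin (p q : Vt) (c : R) :
  poly1 (fun r => exists v, v p = r /\ v q = c /\ forall i, 0 <= gsys i v).
Proof.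
pose g' (i : (Ix + bool)%type) : (Vt -> R) -> R :=
  match i with inl i => gsys i | inr b => if b then (fun v => v q - c) else (fun v => c - v q) end.
have Hc : forall i, caff (g' i).
  case => [i|[]] /=; first exact: caff_gsys.
    by apply: caff_sub; [exact: caff_var | exact: caff_cst].
  by apply: caff_sub; [exact: caff_cst | exact: caff_var].
have [I' [a [b H]]] := fm_proj p Hc.
exists I', a, b => r; rewrite -H; split.
  case=> v [vp [vq hs]]; exists v; split => //.
  by case => [i|[]] /=; [exact: hs | rewrite vq subrr | rewrite vq subrr].
case=> v [vp hs]; exists v; split => //; split.
  have h1 := hs (inr true); have h2 := hs (inr false); simpl in h1, h2.
  by apply/eqP; rewrite eq_le -subr_ge0 h2 -subr_ge0 h1.
by move=> i; apply: (hs (inl i)).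
Qed.

Lemma poly_ext (S S' : R -> Prop) : poly1 S -> (forall r, S r <-> S' r) -> poly1 S'.
Proof. by case=> I [a [b H]] E; exists I, a, b => r; rewrite -E. Qed.

Lemma Gx_sys x eps : Gx x eps <-> exists v, v vX = x /\ v vE = eps /\ forall i, 0 <= gsys i v.
Proof.
split; first by move/enc => [v [h1 h2 h3]]; exists v.
case=> v [h1 [h2 /sat_split [h3 h4]]]; exact: (dec h1 h2 h3 h4).
Qed.

Lemma poly_x : poly1 (fun x => Gx x 1).
Proof.
apply: (poly_ext (poly_pin vX vE 1)) => r; rewrite Gx_sys; split.
  by case=> v [h1 [h2 h3]]; exists v.
by case=> v [h1 [h2 h3]]; exists v.
Qed.

Lemma poly_eps : poly1 (fun eps => Gx (-1) eps).
Proof.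
apply: (poly_ext (poly_pin vE vX (-1))) => r; rewrite Gx_sys; split.
  by case=> v [h1 [h2 h3]]; exists v.
by case=> v [h1 [h2 h3]]; exists v.
Qed.

Lemma meas_map {A B : Type} s (f : Omega -> A) (h : A -> B) :
  meas F s f -> meas F s (fun w => h (f w)).
Proof. by move=> H l hl w1 w2 h1 h2; rewrite (H l hl w1 w2 h1 h2). Qed.

Lemma Gx_scale x eps l : Gx x eps -> 0 < l -> Gx (l * x) (l * eps).
Proof.
case=> y [chi [[my0 [my y0]] hy0 [mc c0] cs hK]] l0.
exists (fun s w => l *: y s w), (fun s w => l * chi s w); split.
- split; first exact: meas_map.
  split; first by move=> t ht; apply: meas_map; apply: my.
  by move=> w; rewrite y0 scaler0.
- by move=> w; rewrite hy0 scalerA.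
- split; first by move=> t ht; apply: meas_map; apply: mc.
  by move=> t w ht; apply: mulr_ge0; [exact: ltW | exact: c0].
- by move=> w; rewrite -mulr_sumr cs.
move=> t ht w.
have -> : l *: y t w + l * chi t w *: xi t w - l *: y t.+1 w =
   l *: (y t w + chi t w *: xi t w - y t.+1 w) by rewrite scalerBr scalerDr scalerA.
by apply: inKZ; [exact: ltW | exact: hK].
Qed.

Lemma Gx_init x : Gx x 1 <-> init_bg T F pi xi (x *: @e R d j).
Proof.
split.
  case=> y [chi [hs hy0 [mc c0] cs hK]]; exists y, chi; split; last exact: hy0.
  split; first exact: hs.
  split; last exact: hK.
  split; first exact: mc.
  split; last exact: cs.
  move=> t w ht; rewrite c0 //= -(cs w).
  have ht' : (t < T.+1)%N by rewrite ltnS.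
  rewrite (bigD1 (Ordinal ht')) //= lerDl sumr_ge0 // => i _; apply: c0.
  by rewrite -ltnS ltn_ord.
case=> y [chi [[hs [[mc [c01 cs]] hK]] hy0]]; exists y, chi; split => //.
split => //; by move=> t w ht; case/andP: (c01 t w ht).
Qed.

Lemma no_arb (w0 : Omega) : no_arbitrage T F pi -> Gx (-1) 0 -> False.
Proof.
move=> NA [y [chi [[my0 [my y0]] hy0 [mc c0] cs hK]]].
have cz : forall t w, (t <= T)%N -> chi t w = 0.
  move=> t w ht; have ht' : (t < T.+1)%N by rewrite ltnS.
  have H : forall i : 'I_T.+1, chi i w = 0.
    move=> i; apply: (psumr_eq0P _ (cs w)) => // k _; apply: c0; by rewrite -ltnS ltn_ord.
  exact: (H (Ordinal ht')).
have hK' : forall t, (t <= T)%N -> forall w, inK t w (y t w - y t.+1 w).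
  by move=> t ht w; have := hK t ht w; rewrite cz // scale0r addr0.
have ye : forall w, y 0%N w = - @e R d j by move=> w; rewrite hy0 scaleN1r.
apply: NA.
exists (fun s w => if s == 0%N then 0 else if (s <= T)%N then y s w + @e R d j else y s w),
  (fun _ => @e R d j).
split.
  split; first by move=> l hl w1 w2 _ _.
  split.
    move=> t /andP [t1 tT] /=; rewrite gtn_eqF //.
    case: (t <= T)%N; last by apply: my; rewrite t1 tT.
    by apply: (meas_map (fun v => v + @e R d j)); apply: my; rewrite t1 tT.
  by move=> w /=; rewrite ltnn y0.
split; first by [].
split.
  move=> t tT w; cbv beta.
  case: (eqVneq t 0%N) => [e0|t0].
    subst t; rewrite /= tT.
    have := hK' 0%N (leq0n _) w; rewrite ye.
    by rewrite sub0r opprD addrC.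
  rewrite (ltnW tT) tT /=.
  by rewrite opprD addrACA subrr addr0; apply: hK'; apply: ltnW.
split; first by move=> l hl w1 w2 _ _.
split.
  by move=> w i; rewrite (@eE R d) ler0n.
split.
  exists w0; apply/negP => /eqP h; have := congr1 (fun M : vec => M 0 j) h.
  by rewrite (@eE R d) eqxx mxE => /eqP; rewrite oner_eq0.
move=> w.
case: (eqVneq T 0%N) => [T0|T0].
  rewrite sub0r T0; have := hK' 0%N (leq0n _) w; rewrite ye.
  have y1 : y 1%N w = 0 by have := y0 w; rewrite T0.
  by rewrite y1 subr0.
rewrite leqnn addrK.
by have := hK' T (leqnn _) w; rewrite y0 subr0.
Qed.

Lemma inK_shift t w v : exists x, inK t w (x *: @e R d j + v).
Proof.
pose m k := Num.max 0 (- v 0 k).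
have m0 : forall k, 0 <= m k by move=> k; rewrite le_max lexx.
have mv : forall k, 0 <= v 0 k + m k.
  by move=> k; rewrite -lerBlDl sub0r le_max lexx orbT.
exists (\sum_k m k * pi t w j k).
exists (fun i => v 0 i + m i), (fun i k => if i == j then m k else 0).
split; first exact: mv.
split; first by move=> i k; case: (i == j).
apply/rowP => i; rewrite compK !mxE eqxx /=.
have -> : \sum_l (if l == j then m i else 0) = m i.
  by rewrite (bigD1 j) //= eqxx big1 ?addr0 // => l /negbTE ->.
case: (eqVneq i j) => [->|ne] /=.
  have -> : (true%:R : R) = 1 by [].
  rewrite mulr1; lra.
have -> : (false%:R : R) = 0 by [].
rewrite mulr0 add0r big1 ?addr0; first lra.
by move=> k _; rewrite mul0r.
Qed.

Lemma Gx_nonempty (w0 : Omega) : rates_ok T F pi -> adapted T F xi ->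
  F 0%N = [set [set: Omega]]%SET -> exists x, Gx x 1.
Proof.
move=> hpi hxi hF0.
have hT : [set: Omega]%SET \in F 0%N by rewrite hF0 inE.
have [x hx] := inK_shift 0%N w0 (xi 0%N w0).
have cst : forall w, pi 0%N w = pi 0%N w0 /\ xi 0%N w = xi 0%N w0.
  move=> w; split.
    by case: (hpi 0%N (leq0n _)) => H _; apply: (H _ hT); rewrite inE.
  by apply: (hxi 0%N (leq0n _) _ hT); rewrite inE.
exists x, (fun s w => if s == 0%N then x *: @e R d j else 0), (fun s w => (s == 0%N)%:R); split.
- split; first by move=> l hl w1 w2 _ _.
  split; first by move=> t /andP [t1 _] /=; rewrite gtn_eqF //; move=> l hl w1 w2 _ _.
  by move=> w.
- by move=> w.
- split; first by move=> t ht l hl w1 w2 _ _.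
  by move=> t w _; rewrite ler0n.
- by move=> w; rewrite big_ord_recl /= big1 ?addr0.
move=> t ht w /=.
case: (eqVneq t 0%N) => [->|t0] /=.
  rewrite scale1r subr0; have [e1 e2] := cst w.
  rewrite e2; move: hx; rewrite /inK e1.
  by [].
by rewrite scale0r !addr0 subrr; apply: inK0.
Qed.

End Enc.

Unset Implicit Arguments.
Set Strict Implicit.
Local Open Scope ring_scope.
Local Open Scope classical_set_scope.

Theorem theorem5p3 (R : realType) (d : nat) (Omega : finType) (T : nat)
  (F : nat -> {set {set Omega}}) (P : Omega -> R)
  (pi : nat -> Omega -> 'I_d -> 'I_d -> R) (xi : nat -> Omega -> vec R d) :
  filtered_space T F P -> rates_ok T F pi -> no_arbitrage T F pi ->
  adapted T F xi ->
  Zbd0 T F pi xi = init_bg T F pi xi /\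
  forall j : 'I_d,
    exists p : R,
      bid_price T F pi xi j = p%:E /\
      (exists x : R, Zbd0 T F pi xi (x *: @e R d j) /\ p = - x) /\
      (forall x : R, Zbd0 T F pi xi (x *: @e R d j) -> - x <= p) /\
      (exists y chi, Phi_bg T F pi xi y chi /\
         forall w, p *: @e R d j = - y 0%N w).
Proof.
move=> hF hpi hNA hxi.
have HZ := Zbd0_init pi hF hxi.
split => // j.
have hF0 : F 0%N = [set [set: Omega]]%SET by case: hF => _ [_ [_ [_ [-> _]]]].
have [w0 _] : exists w : Omega, w \in [set: Omega]%SET.
  by apply: (atom_ne hF (leq0n T)); rewrite hF0 inE.
pose S := fun x => Gx T F pi xi j x 1.
have hS : poly1 S := poly_x T F pi xi j.
have ne : exists r, S r := Gx_nonempty j w0 hpi hxi hF0.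
have lb : exists L, forall r, S r -> L <= r.
  case: (pselect (exists L, forall r, S r -> L <= r)) => // hn.
  exfalso; apply: (no_arb (xi := xi) (j := j) w0 hNA).
  apply: (poly1_closed0 (poly_eps T F pi xi j)) => e e0.
  case: (pselect (exists r, S r /\ r < - e^-1)) => [[r [Sr hr]]|hnr]; last first.
    exfalso; apply: hn; exists (- e^-1) => r Sr; rewrite leNgt; apply/negP => hr.
    by apply: hnr; exists r.
  have r0 : r < 0 by apply: (lt_trans hr); rewrite oppr_lt0 invr_gt0.
  have nr0 : 0 < - r by rewrite oppr_gt0.
  exists (- r^-1); split.
  - by rewrite -invrN ltW // invr_gt0.
  - rewrite -invrN -[(- r)^-1]mul1r ltr_pdivrMr //.
    have : e^-1 < - r by rewrite ltrNr.
    rewrite -(ltr_pM2l e0) mulfV ?gt_eqF //.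
  - have := Gx_scale Sr (_ : 0 < - r^-1); rewrite mulr1 mulNr mulVf ?lt_eqF //.
    by apply; rewrite -invrN invr_gt0.
have [m [Sm hm]] := poly1_min hS ne lb.
have ZS : forall x, Zbd0 T F pi xi (x *: @e R d j) <-> S x.
  by move=> x; rewrite HZ /S (Gx_init T F pi xi j x).
exists (- m); split.
  apply/eqP; rewrite eq_le; apply/andP; split.
    apply: ge_ereal_sup => _ [x Sx <-]; rewrite lee_fin lerN2; apply: hm.
    by apply/(Gx_init T F pi xi j).
  by apply: ereal_sup_ubound; exists m => //; apply/(Gx_init T F pi xi j).
split; first by exists m; split => //; apply/ZS.
split; first by move=> x /ZS Sx; rewrite lerN2; apply: hm.
have := Sm; move/(Gx_init T F pi xi j) => [y [chi [H hy]]]; exists y, chi; split => // w.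
by rewrite hy scaleNr.
Qed.
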